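(* Let $f\in C(\mathbb{R}^4)$, $f=f(r,\tau,u,t)$, be bounded, $\kappa$-Lipschitz, $1$-periodic in $r$ and $\tau$, and non-increasing in $u$. Let $\bar f(u_0,t_0)$ be the constant with $\lim_{\varepsilon\to0}u^\varepsilon(t;c,u_0,t_0)=c+\bar f(u_0,t_0)t$, where $u^\varepsilon(\cdot;c,u_0,t_0)$ solves $\dot u^\varepsilon=f(u^\varepsilon/\varepsilon,t/\varepsilon,u_0,t_0)$, $u^\varepsilon(0)=c$. Let $\overline u(t;c)$ be the solution of $\dot{\overline u}=\bar f(\overline u,t)$, $\overline u(0)=c$, and $u^\varepsilon(t;c)$ the solution of $\dot u^\varepsilon=f(u^\varepsilon/\varepsilon,t/\varepsilon,u^\varepsilon,t)$, $u^\varepsilon(0)=c$. Then for all $t>0$ and $c\in\mathbb{R}$, $|u^\varepsilon(t;c)-\overline u(t;c)|\le 2\|f\|_\infty t$. *)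

(* Defs.v *)
From Stdlib Require Import Reals.
From Coquelicot Require Import Coquelicot.
Open Scope R_scope.

Definition fun4 := R -> R -> R -> R -> R.

Definition continuous4 (f : fun4) : Prop :=
  forall r tau u t,
    continuous (fun p : R * R * R * R =>
                  let '(r', tau', u', t') := p in f r' tau' u' t') (r, tau, u, t).

Definition bounded4 (f : fun4) : Prop :=
  exists M, forall r tau u t, Rabs (f r tau u t) <= M.

Definition lipschitz4 (kappa : R) (f : fun4) : Prop :=
  forall r tau u t r' tau' u' t',
    Rabs (f r tau u t - f r' tau' u' t') <=
    kappa * sqrt ((r - r')^2 + (tau - tau')^2 + (u - u')^2 + (t - t')^2).

Definition periodic_r_tau (f : fun4) : Prop :=
  forall r tau u t, f (r + 1) tau u t = f r tau u t /\ f r (tau + 1) u t = f r tau u t.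

Definition nonincreasing_u (f : fun4) : Prop :=
  forall r tau u1 u2 t, u1 <= u2 -> f r tau u2 t <= f r tau u1 t.

Definition supnorm (f : fun4) : R :=
  real (Lub_Rbar (fun y => exists r tau u t, y = Rabs (f r tau u t))).

Definition solves (g : R -> R -> R) (c : R) (v : R -> R) : Prop :=
  v 0 = c /\ forall t, is_derive v t (g t (v t)).

Definition is_effective (f : fun4) (fbar : R -> R -> R) : Prop :=
  forall u0 t0 c (ueps : R -> R -> R),
    (forall eps, 0 < eps ->
       solves (fun t v => f (v / eps) (t / eps) u0 t0) c (ueps eps)) ->
    forall t, filterlim (fun eps => ueps eps t) (at_right 0) (locally (c + fbar u0 t0 * t)).

(* Main.v *)
Require Import Defs.
From Stdlib Require Import Reals Psatz Lra.
From Coquelicot Require Import Coquelicot.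
Open Scope R_scope.

Lemma der_cont (F : R -> R) x d : is_derive F x d -> continuity_pt F x.
Proof.
  intro H. apply continuity_pt_filterlim. apply (ex_derive_continuous (K:=R_AbsRing) (V:=R_NormedModule) F).
  exists d; exact H.
Qed.

Lemma cmp (F dF G dG : R -> R) :
  (forall s, is_derive F s (dF s)) -> (forall s, is_derive G s (dG s)) ->
  (forall s, Rabs (dF s) <= dG s) ->
  forall a b, Rabs (F b - F a) <= Rabs (G b - G a).
Proof.
  intros HF HG Hd a b.
  assert (D1 : forall s, is_derive (fun s => G s - F s) s (dG s - dF s)).
  { intro s. apply (is_derive_minus G F); auto. }
  assert (D2 : forall s, is_derive (fun s => G s + F s) s (dG s + dF s)).
  { intro s. apply (is_derive_plus G F); auto. }
  destruct (MVT_gen (fun s => G s - F s) a b (fun s => dG s - dF s)) as [c1 [_ E1]].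
  { intros; apply D1. }
  { intros; eapply der_cont; apply D1. }
  destruct (MVT_gen (fun s => G s + F s) a b (fun s => dG s + dF s)) as [c2 [_ E2]].
  { intros; apply D2. }
  { intros; eapply der_cont; apply D2. }
  simpl in E1, E2.
  pose proof (Hd c1) as H1. pose proof (Hd c2) as H2.
  apply Rabs_le_between in H1. apply Rabs_le_between in H2.
  destruct (Rle_dec a b) as [Hab|Hab].
  - assert (0 <= (dG c1 - dF c1) * (b - a)) by (apply Rmult_le_pos; lra).
    assert (0 <= (dG c2 + dF c2) * (b - a)) by (apply Rmult_le_pos; lra).
    set (u1 := (dG c1 - dF c1) * (b - a)) in *. set (u2 := (dG c2 + dF c2) * (b - a)) in *. rewrite (Rabs_right (G b - G a)) by lra.
    apply Rabs_le; lra.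
  - assert ((dG c1 - dF c1) * (b - a) <= 0) by (apply Rnot_le_lt in Hab; nra).
    assert ((dG c2 + dF c2) * (b - a) <= 0) by (apply Rnot_le_lt in Hab; nra).
    set (u1 := (dG c1 - dF c1) * (b - a)) in *. set (u2 := (dG c2 + dF c2) * (b - a)) in *. rewrite (Rabs_left1 (G b - G a)) by lra.
    apply Rabs_le; lra.
Qed.

Lemma ball_R (x e y : R) : ball x e y <-> Rabs (y - x) < e.
Proof. split; intro H; exact H. Qed.

Lemma lip_cont (f : R -> R) L x : 0 <= L ->
  (forall a b, Rabs (f a - f b) <= L * Rabs (a - b)) -> continuous f x.
Proof.
  intros HL Hf. apply filterlim_locally. intro eps.
  assert (Hd : 0 < eps / (L + 1)) by (apply Rdiv_lt_0_compat; [apply cond_pos| lra]).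
  exists (mkposreal _ Hd). intros y Hy. apply ball_R in Hy. apply ball_R. simpl in Hy.
  eapply Rle_lt_trans. apply Hf.
  apply Rle_lt_trans with ((L+1) * Rabs (y - x)).
  { pose proof (Rabs_pos (y - x)); nra. }
  apply Rmult_lt_reg_l with (/ (L+1)). apply Rinv_0_lt_compat; lra.
  rewrite <- Rmult_assoc, Rinv_l by lra. rewrite Rmult_1_l.
  unfold Rdiv in Hy. rewrite Rmult_comm. exact Hy.
Qed.

Lemma lim_le (u : nat -> R) (l b : R) : is_lim_seq u l -> (forall n, u n <= b) -> l <= b.
Proof.
  intros Hu Hb.
  pose proof (is_lim_seq_le u (fun _ => b) l b Hb Hu (is_lim_seq_const b)). exact H.
Qed.

Lemma small (x B : R) : 0 <= B -> (forall n, Rabs x <= B * (/2)^n) -> x = 0.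
Proof.
  intros HB H. destruct (Req_dec x 0) as [|Hx]; auto. exfalso.
  assert (Hp : 0 < Rabs x) by (apply Rabs_pos_lt; auto).
  destruct (pow_lt_1_zero (/2) ltac:(rewrite Rabs_right; lra) (Rabs x / (B+1)))
    as [N HN]. { apply Rdiv_lt_0_compat; lra. }
  specialize (HN N (le_n N)). specialize (H N).
  rewrite Rabs_right in HN by (apply Rle_ge, pow_le; lra).
  assert (0 <= (/2)^N) by (apply pow_le; lra).
  assert ((B+1) * (/2)^N < Rabs x).
  { apply Rmult_lt_reg_l with (/ (B+1)). apply Rinv_0_lt_compat; lra.
    rewrite <- Rmult_assoc, Rinv_l by lra. rewrite Rmult_1_l.
    unfold Rdiv in HN. rewrite Rmult_comm. exact HN. }
  nra.
Qed.

Fixpoint pic (g : R -> R -> R) (c : R) (n : nat) : R -> R :=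
  match n with
  | O => fun _ => c
  | S n => fun t => c + RInt (fun s => g s (pic g c n s)) 0 t
  end.

Definition sol (g : R -> R -> R) (c : R) (t : R) : R :=
  real (Lim_seq (fun n => pic g c n t)).

Definition EE (K t : R) := exp (2*K*t) + exp (-(2*K*t)).
Definition SS (K t : R) := (exp (2*K*t) - exp (-(2*K*t))) / (4*K).

Section ODE.
Variable g : R -> R -> R.
Variables M K c : R.
Hypothesis HK : 0 < K.
Hypothesis Hb : forall t v, Rabs (g t v) <= M.
Hypothesis Hl : forall t v t' v', Rabs (g t v - g t' v') <= K * (Rabs (t - t') + Rabs (v - v')).

Lemma M_nonneg : 0 <= M.
Proof. pose proof (Hb 0 0); pose proof (Rabs_pos (g 0 0)); lra. Qed.

Lemma hcont (p : R -> R) x : continuous p x -> continuous (fun s => g s (p s)) x.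
Proof.
  intros Hp. apply filterlim_locally. intro eps.
  assert (Hd : 0 < eps / (2*K)) by (apply Rdiv_lt_0_compat; [apply cond_pos| lra]).
  pose proof (proj1 (filterlim_locally p (p x)) Hp (mkposreal _ Hd)) as H1.
  pose proof (locally_ball x (mkposreal _ Hd)) as H2.
  generalize (filter_and _ _ H1 H2). apply filter_imp.
  intros y [Hy1 Hy2]. simpl in *. change (Rabs (p y - p x) < eps / (2*K)) in Hy1. change (Rabs (y - x) < eps / (2*K)) in Hy2. apply ball_R.
  eapply Rle_lt_trans. apply Hl.
  assert (Rabs (y - x) + Rabs (p y - p x) < 2 * (eps / (2*K))) by lra.
  replace (pos eps) with (K * (2 * (eps / (2*K)))) by (field; lra).
  apply Rmult_lt_compat_l; lra.
Qed.

Lemma int_der (p : R -> R) : (forall x, continuous p x) ->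
  forall t, is_derive (fun t => c + RInt (fun s => g s (p s)) 0 t) t (g t (p t)).
Proof.
  intros Hp t.
  assert (Hh : forall x, continuous (fun s => g s (p s)) x) by (intro; apply hcont; auto).
  assert (H1 : is_derive (RInt (fun s => g s (p s)) 0) t (g t (p t))).
  { apply (is_derive_RInt (fun s => g s (p s)) (RInt (fun s => g s (p s)) 0) 0 t).
    - apply filter_forall. intro b. apply (RInt_correct (V:=R_CompleteNormedModule)). apply (ex_RInt_continuous (V:=R_CompleteNormedModule)).
      intros; apply Hh.
    - apply Hh. }
  pose proof (is_derive_plus (fun _ => c) (RInt (fun s => g s (p s)) 0) t zero (g t (p t))
     (is_derive_const c t) H1) as H2.
  rewrite plus_zero_l in H2. exact H2.
Qed.

Lemma pic_cont n : forall x, continuous (pic g c n) x.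
Proof.
  induction n; intro x.
  - simpl. apply continuous_const.
  - apply (ex_derive_continuous (K:=R_AbsRing) (V:=R_NormedModule)).
    eexists. apply (int_der (pic g c n) IHn x).
Qed.

Lemma pic_der n t : is_derive (pic g c (S n)) t (g t (pic g c n t)).
Proof. exact (int_der _ (pic_cont n) t). Qed.

Lemma pic0 n : pic g c n 0 = c.
Proof. destruct n; simpl; [reflexivity|]. rewrite RInt_point. apply Rplus_0_r. Qed.

Lemma EE_ge2 t : 2 <= EE K t.
Proof.
  unfold EE. rewrite exp_Ropp. pose proof (exp_pos (2*K*t)).
  set (x := exp (2*K*t)) in *.
  assert (x * / x = 1) by (field; lra).
  assert (0 < / x) by (apply Rinv_0_lt_compat; lra).
  assert (0 <= (x - 1) * (x - 1) * / x) by (apply Rmult_le_pos; [pose proof (Rle_0_sqr (x - 1)); unfold Rsqr in *; lra | lra]).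
  replace ((x - 1) * (x - 1) * / x) with (x - 2 + / x) in H2 by (field; lra). lra.
Qed.

Lemma SS_der t : is_derive (SS K) t (EE K t / 2).
Proof.
  unfold SS, EE. auto_derive; auto. field. lra.
Qed.

Lemma SS_bound t : Rabs (SS K t - SS K 0) <= EE K t / (4*K).
Proof.
  unfold SS, EE. replace (2*K*0) with 0 by ring. rewrite Ropp_0, exp_0.
  replace ((1 - 1) / (4*K)) with 0 by (field; lra). rewrite Rminus_0_r.
  unfold Rdiv. rewrite Rabs_mult. rewrite (Rabs_right (/ (4*K))).
  2: { apply Rle_ge, Rlt_le, Rinv_0_lt_compat; lra. }
  apply Rmult_le_compat_r. apply Rlt_le, Rinv_0_lt_compat; lra.
  pose proof (exp_pos (2*K*t)). pose proof (exp_pos (-(2*K*t))).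
  apply Rabs_le; lra.
Qed.

Lemma cmpE (F dF : R -> R) (C : R) : 0 <= C -> (forall s, is_derive F s (dF s)) ->
  (forall s, Rabs (dF s) <= C * EE K s / 2) ->
  forall t, Rabs (F t - F 0) <= C * EE K t / (4*K).
Proof.
  intros HC HF Hd t.
  eapply Rle_trans.
  apply (cmp F dF (fun s => C * SS K s) (fun s => C * (EE K s / 2)) HF).
  - intro s. apply is_derive_scal. apply SS_der.
  - intro s. eapply Rle_trans; [apply Hd| right; unfold Rdiv; ring].
  - replace (C * SS K t - C * SS K 0) with (C * (SS K t - SS K 0)) by ring.
    rewrite Rabs_mult, Rabs_right by lra.
    replace (C * EE K t / (4*K)) with (C * (EE K t / (4*K))) by (field; lra).
    apply Rmult_le_compat_l; auto. apply SS_bound.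
Qed.

Definition A := M / (4*K).

Lemma A_nonneg : 0 <= A.
Proof. unfold A. apply Rmult_le_pos. apply M_nonneg. apply Rlt_le, Rinv_0_lt_compat; lra. Qed.

Lemma d_bound n : forall t, Rabs (pic g c (S n) t - pic g c n t) <= A * (/2)^n * EE K t.
Proof.
  induction n; intro t.
  - assert (Hd : forall s, Rabs (g s c) <= M * EE K s / 2).
    { intro s. pose proof (EE_ge2 s). pose proof M_nonneg. pose proof (Hb s c). nra. }
    pose proof (cmpE (pic g c 1) (fun s => g s c) M M_nonneg (pic_der 0) Hd t) as H.
    rewrite (pic0 1) in H. simpl pic at 2.
    replace (A * (/2)^0 * EE K t) with (M * EE K t / (4*K)) by (unfold A; simpl; field; lra).
    exact H.
  - assert (HC : 0 <= 2 * K * A * (/2)^n).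
    { pose proof A_nonneg. assert (0 <= (/2)^n) by (apply pow_le; lra).
      apply Rmult_le_pos; [|auto]. apply Rmult_le_pos; lra. }
    assert (HD : forall s, is_derive (fun s => pic g c (S (S n)) s - pic g c (S n) s) s
               (g s (pic g c (S n) s) - g s (pic g c n s))).
    { intro s. apply (is_derive_minus (pic g c (S (S n))) (pic g c (S n))); apply pic_der. }
    assert (Hd : forall s, Rabs (g s (pic g c (S n) s) - g s (pic g c n s)) <= 2 * K * A * (/2)^n * EE K s / 2).
    { intro s. eapply Rle_trans. apply Hl. rewrite Rminus_diag, Rabs_R0, Rplus_0_l.
      replace (2 * K * A * (/2)^n * EE K s / 2) with (K * (A * (/2)^n * EE K s)) by field.
      apply Rmult_le_compat_l; [lra|]. apply IHn. }
    pose proof (cmpE _ _ _ HC HD Hd t) as H. cbv beta in H.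
    rewrite !pic0, Rminus_diag, Rminus_0_r in H.
    replace (A * (/2)^(S n) * EE K t) with (2 * K * A * (/2)^n * EE K t / (4*K))
      by (simpl; field; lra).
    exact H.
Qed.

Lemma EE_pos t : 0 <= EE K t.
Proof. pose proof (EE_ge2 t); lra. Qed.

Lemma diff_bound n k t :
  Rabs (pic g c (n + k) t - pic g c n t) <= 2 * A * EE K t * ((/2)^n - (/2)^(n + k)).
Proof.
  induction k.
  - rewrite Nat.add_0_r, !Rminus_diag, Rabs_R0, Rmult_0_r. lra.
  - rewrite Nat.add_succ_r.
    replace (pic g c (S (n + k)) t - pic g c n t) with
      ((pic g c (S (n + k)) t - pic g c (n + k) t) + (pic g c (n + k) t - pic g c n t)) by ring.
    eapply Rle_trans. apply Rabs_triang.
    eapply Rle_trans. apply Rplus_le_compat. apply d_bound. apply IHk.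
    right. change ((/2)^(S (n+k))) with (/2 * (/2)^(n+k)). field.
Qed.

Lemma diff_bound' n m t : (n <= m)%nat ->
  Rabs (pic g c m t - pic g c n t) <= 2 * A * EE K t * (/2)^n.
Proof.
  intro Hnm. replace m with (n + (m - n))%nat by lia.
  eapply Rle_trans. apply diff_bound.
  pose proof A_nonneg. pose proof (EE_pos t).
  assert (0 <= (/2)^(n + (m - n))) by (apply pow_le; lra).
  assert (0 <= 2 * A * EE K t) by (apply Rmult_le_pos; lra).
  nra.
Qed.

Lemma cauchy t : ex_lim_seq_cauchy (fun n => pic g c n t).
Proof.
  intro eps. pose proof A_nonneg. pose proof (EE_pos t).
  set (B := 2 * A * EE K t).
  assert (HB : 0 <= B) by (unfold B; apply Rmult_le_pos; [lra|auto]).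
  destruct (pow_lt_1_zero (/2) ltac:(rewrite Rabs_right; lra) (eps / (2*B+1)))
    as [N HN]. { apply Rdiv_lt_0_compat; [apply cond_pos|lra]. }
  exists N. intros n m Hn Hm.
  specialize (HN N (le_n N)).
  rewrite Rabs_right in HN by (apply Rle_ge, pow_le; lra).
  assert (0 <= (/2)^N) by (apply pow_le; lra).
  assert (Hq : (2*B+1) * (/2)^N < eps).
  { apply Rmult_lt_reg_l with (/ (2*B+1)). apply Rinv_0_lt_compat; lra.
    rewrite <- Rmult_assoc, Rinv_l by lra. rewrite Rmult_1_l.
    unfold Rdiv in HN. rewrite Rmult_comm. exact HN. }
  replace (pic g c n t - pic g c m t) with
    ((pic g c n t - pic g c N t) - (pic g c m t - pic g c N t)) by ring.
  eapply Rle_lt_trans. apply Rabs_triang. rewrite Rabs_Ropp.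
  pose proof (diff_bound' N n t Hn). pose proof (diff_bound' N m t Hm).
  fold B in H2, H3. nra.
Qed.

Lemma v_lim t : is_lim_seq (fun n => pic g c n t) (sol g c t).
Proof.
  destruct (proj2 (ex_lim_seq_cauchy_corr _) (cauchy t)) as [l Hl0].
  unfold sol. rewrite (is_lim_seq_unique _ _ Hl0). exact Hl0.
Qed.

Lemma v_bound n t : Rabs (sol g c t - pic g c n t) <= 2 * A * EE K t * (/2)^n.
Proof.
  apply (lim_le (fun k => Rabs (pic g c (k + n) t - pic g c n t))).
  - apply (is_lim_seq_abs _ (Finite (sol g c t - pic g c n t))).
    apply is_lim_seq_minus'. apply (is_lim_seq_incr_n (fun k => pic g c k t)). apply v_lim.
    apply is_lim_seq_const.
  - intro k. apply diff_bound'. lia.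
Qed.

Lemma pic_lip n a b : Rabs (pic g c n b - pic g c n a) <= M * Rabs (b - a).
Proof.
  pose proof M_nonneg. destruct n.
  - simpl. rewrite Rminus_diag, Rabs_R0. pose proof (Rabs_pos (b - a)). nra.
  - eapply Rle_trans.
    apply (cmp (pic g c (S n)) (fun s => g s (pic g c n s)) (fun s => M * s) (fun _ => M)).
    + apply pic_der.
    + intro s. auto_derive; auto. ring.
    + intro s. apply Hb.
    + right. replace (M * b - M * a) with (M * (b - a)) by ring.
      rewrite Rabs_mult, (Rabs_right M) by lra. reflexivity.
Qed.

Lemma sol_lip a b : Rabs (sol g c b - sol g c a) <= M * Rabs (b - a).
Proof.
  apply (lim_le (fun k => Rabs (pic g c k b - pic g c k a))).
  - apply (is_lim_seq_abs _ (Finite (sol g c b - sol g c a))).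
    apply is_lim_seq_minus'; apply v_lim.
  - intro k. apply pic_lip.
Qed.

Lemma sol_cont x : continuous (sol g c) x.
Proof. apply (lip_cont _ M x M_nonneg). intros a b. apply sol_lip. Qed.

Definition HH t := c + RInt (fun s => g s (sol g c s)) 0 t.

Lemma HH0 : HH 0 = c.
Proof. unfold HH. rewrite RInt_point. apply Rplus_0_r. Qed.

Lemma HH_close n t : Rabs (HH t - pic g c (S n) t) <= A * (/2)^n * EE K t.
Proof.
  assert (HC : 0 <= 4 * K * A * (/2)^n).
  { pose proof A_nonneg. assert (0 <= (/2)^n) by (apply pow_le; lra).
    apply Rmult_le_pos; [|auto]. apply Rmult_le_pos; lra. }
  assert (HD : forall s, is_derive (fun s => HH s - pic g c (S n) s) s
               (g s (sol g c s) - g s (pic g c n s))).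
  { intro s. apply (is_derive_minus HH (pic g c (S n))).
    apply (int_der (sol g c) sol_cont). apply pic_der. }
  assert (Hd : forall s, Rabs (g s (sol g c s) - g s (pic g c n s)) <= 4 * K * A * (/2)^n * EE K s / 2).
  { intro s. eapply Rle_trans. apply Hl. rewrite Rminus_diag, Rabs_R0, Rplus_0_l.
    replace (4 * K * A * (/2)^n * EE K s / 2) with (K * (2 * A * EE K s * (/2)^n)) by field.
    apply Rmult_le_compat_l; [lra|]. apply v_bound. }
  pose proof (cmpE _ _ _ HC HD Hd t) as H. cbv beta in H.
  rewrite HH0, pic0, Rminus_diag, Rminus_0_r in H.
  replace (A * (/2)^n * EE K t) with (4 * K * A * (/2)^n * EE K t / (4*K)) by (field; lra).
  exact H.
Qed.

Lemma HH_eq t : HH t = sol g c t.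
Proof.
  apply Rminus_diag_uniq. apply (small _ (2 * A * EE K t)).
  { pose proof A_nonneg. pose proof (EE_pos t). apply Rmult_le_pos; lra. }
  intro n.
  replace (HH t - sol g c t) with ((HH t - pic g c (S n) t) - (sol g c t - pic g c (S n) t)) by ring.
  eapply Rle_trans. apply Rabs_triang. rewrite Rabs_Ropp.
  eapply Rle_trans. apply Rplus_le_compat. apply HH_close. apply v_bound.
  right. change ((/2)^(S n)) with (/2 * (/2)^n). field.
Qed.

Theorem exist_sol : solves (fun t v => g t v) c (sol g c).
Proof.
  split.
  - rewrite <- HH_eq. apply HH0.
  - intro t. apply (is_derive_ext HH). apply HH_eq.
    apply (int_der (sol g c) sol_cont).
Qed.

End ODE.

Lemma sup_bound (f : fun4) : bounded4 f ->
  forall r tau u t, Rabs (f r tau u t) <= supnorm f.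
Proof.
  intros [B HB] r tau u t. unfold supnorm.
  set (E := fun y => exists r tau u t, y = Rabs (f r tau u t)).
  destruct (Lub_Rbar_correct E) as [Hub Hlub].
  assert (H1 : Rbar_le (Lub_Rbar E) B).
  { apply Hlub. intros y [r' [tau' [u' [t' ->]]]]. simpl. apply HB. }
  assert (H2 : Rbar_le (Rabs (f r tau u t)) (Lub_Rbar E)).
  { apply Hub. exists r, tau, u, t. reflexivity. }
  destruct (Lub_Rbar E); simpl in *; try contradiction. exact H2.
Qed.

Lemma sol_bound (g : R -> R -> R) M c v : (forall t w, Rabs (g t w) <= M) ->
  solves g c v -> forall a b, Rabs (v b - v a) <= M * Rabs (b - a).
Proof.
  intros Hb [_ Hd] a b.
  assert (HM : 0 <= M) by (pose proof (Hb 0 0); pose proof (Rabs_pos (g 0 0)); lra).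
  eapply Rle_trans.
  apply (cmp v (fun s => g s (v s)) (fun s => M * s) (fun _ => M)).
  + apply Hd.
  + intro s. auto_derive; auto. ring.
  + intro s. apply Hb.
  + right. replace (M * b - M * a) with (M * (b - a)) by ring.
    rewrite Rabs_mult, (Rabs_right M) by lra. reflexivity.
Qed.

Lemma lip_g (f : fun4) kappa eps u0 t0 : 0 < eps -> lipschitz4 kappa f ->
  forall t v t' v', Rabs (f (v/eps) (t/eps) u0 t0 - f (v'/eps) (t'/eps) u0 t0)
     <= (Rabs kappa / eps + 1) * (Rabs (t - t') + Rabs (v - v')).
Proof.
  intros He Hlip t v t' v'.
  eapply Rle_trans. apply Hlip.
  rewrite !Rminus_diag.
  set (a := v / eps - v' / eps). set (b := t / eps - t' / eps).
  assert (Ha : Rabs a = Rabs (v - v') / eps).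
  { unfold a. replace (v / eps - v' / eps) with ((v - v') * / eps) by (field; lra).
    rewrite Rabs_mult, (Rabs_right (/ eps)). reflexivity.
    apply Rle_ge, Rlt_le, Rinv_0_lt_compat; lra. }
  assert (Hb' : Rabs b = Rabs (t - t') / eps).
  { unfold b. replace (t / eps - t' / eps) with ((t - t') * / eps) by (field; lra).
    rewrite Rabs_mult, (Rabs_right (/ eps)). reflexivity.
    apply Rle_ge, Rlt_le, Rinv_0_lt_compat; lra. }
  assert (Hs : sqrt (a ^ 2 + b ^ 2 + 0 ^ 2 + 0 ^ 2) <= Rabs a + Rabs b).
  { rewrite <- (sqrt_pow2 (Rabs a + Rabs b)) by (pose proof (Rabs_pos a); pose proof (Rabs_pos b); lra).
    apply sqrt_le_1_alt.
    rewrite <- (pow2_abs a), <- (pow2_abs b).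
    pose proof (Rabs_pos a); pose proof (Rabs_pos b). nra. }
  pose proof (sqrt_pos (a ^ 2 + b ^ 2 + 0 ^ 2 + 0 ^ 2)).
  set (s := sqrt (a ^ 2 + b ^ 2 + 0 ^ 2 + 0 ^ 2)) in *.
  rewrite Ha, Hb' in Hs.
  assert (kappa * s <= Rabs kappa * s).
  { apply Rmult_le_compat_r; auto. apply Rle_abs. }
  assert (Rabs kappa * s <= Rabs kappa * ((Rabs (t - t') + Rabs (v - v')) / eps)).
  { apply Rmult_le_compat_l. apply Rabs_pos.
    eapply Rle_trans. exact Hs. right. field. lra. }
  pose proof (Rabs_pos (t - t')). pose proof (Rabs_pos (v - v')). pose proof (Rabs_pos kappa).
  assert (Rabs kappa * ((Rabs (t - t') + Rabs (v - v')) / eps) =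
          Rabs kappa / eps * (Rabs (t - t') + Rabs (v - v'))) by (field; lra).
  nra.
Qed.

Lemma fbar_bound (f : fun4) kappa fbar : bounded4 f -> lipschitz4 kappa f ->
  is_effective f fbar -> forall u0 t0, Rabs (fbar u0 t0) <= supnorm f.
Proof.
  intros Hbd Hlip Hfbar u0 t0.
  set (M := supnorm f).
  pose proof (sup_bound f Hbd) as HM.
  set (ueps := fun eps => sol (fun t v => f (v / eps) (t / eps) u0 t0) 0).
  assert (Hs : forall eps, 0 < eps ->
            solves (fun t v => f (v / eps) (t / eps) u0 t0) 0 (ueps eps)).
  { intros eps He. unfold ueps.
    apply (exist_sol (fun t v => f (v / eps) (t / eps) u0 t0) M (Rabs kappa / eps + 1) 0).
    - pose proof (Rabs_pos kappa). assert (0 <= Rabs kappa / eps).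
      { apply Rmult_le_pos; auto. apply Rlt_le, Rinv_0_lt_compat; lra. } lra.
    - intros; apply HM.
    - intros; apply lip_g; auto. }
  assert (Hbd1 : forall eps, 0 < eps -> Rabs (ueps eps 1) <= M).
  { intros eps He. pose proof (sol_bound _ M 0 (ueps eps) ltac:(intros; apply HM) (Hs eps He) 0 1) as H.
    destruct (Hs eps He) as [H0 _]. rewrite H0, Rminus_0_r, Rminus_0_r, Rabs_R1, Rmult_1_r in H.
    exact H. }
  pose proof (Hfbar u0 t0 0 ueps Hs 1) as Hlim.
  rewrite Rplus_0_l, Rmult_1_r in Hlim.
  destruct (Rle_dec (Rabs (fbar u0 t0)) M) as [|Hn]; auto. exfalso.
  apply Rnot_le_lt in Hn.
  assert (Hd : 0 < Rabs (fbar u0 t0) - M) by lra.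
  pose proof (proj1 (filterlim_locally _ _) Hlim (mkposreal _ Hd)) as H1.
  assert (H2 : at_right 0 (fun x => 0 < x)).
  { exists (mkposreal _ Rlt_0_1). intros; auto. }
  destruct (filter_ex _ (filter_and _ _ H1 H2)) as [e [He1 He2]].
  simpl in He1. change (Rabs (ueps e 1 - fbar u0 t0) < Rabs (fbar u0 t0) - M) in He1.
  pose proof (Hbd1 e He2).
  pose proof (Rabs_triang_inv (fbar u0 t0) (ueps e 1)).
  rewrite Rabs_minus_sym in He1. lra.
Qed.

Theorem lemma2p6 (f : fun4) (kappa : R) (fbar : R -> R -> R)
  (Hcont : continuous4 f) (Hbdd : bounded4 f) (Hlip : lipschitz4 kappa f)
  (Hper : periodic_r_tau f) (Hmon : nonincreasing_u f)
  (Hfbar : is_effective f fbar) :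
  forall (c : R) (ubar : R -> R),
    solves (fun t v => fbar v t) c ubar ->
    forall (eps : R) (ue : R -> R), 0 < eps ->
      solves (fun t v => f (v / eps) (t / eps) v t) c ue ->
      forall t, 0 < t -> Rabs (ue t - ubar t) <= 2 * supnorm f * t.
Proof.
  intros c ubar Hub eps ue He Hue t Ht.
  pose proof (sup_bound f Hbdd) as HM.
  pose proof (fbar_bound f kappa fbar Hbdd Hlip Hfbar) as HF.
  pose proof (sol_bound _ (supnorm f) c ue ltac:(intros; apply HM) Hue 0 t) as H1.
  pose proof (sol_bound _ (supnorm f) c ubar ltac:(intros; apply HF) Hub 0 t) as H2.
  destruct Hue as [E1 _]. destruct Hub as [E2 _].
  rewrite E1, Rminus_0_r, (Rabs_right t) in H1 by lra.
  rewrite E2, Rminus_0_r, (Rabs_right t) in H2 by lra.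
  replace (ue t - ubar t) with ((ue t - c) - (ubar t - c)) by ring.
  eapply Rle_trans. apply Rabs_triang. rewrite Rabs_Ropp. lra.
Qed.
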